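(* Let \[ \theta = \begin{pmatrix} 0 & \theta_{1,2} & \theta_{1,3} \\ -\theta_{1,2} & 0 & \theta_{2,3} \\ -\theta_{1,3} & -\theta_{2,3} & 0 \end{pmatrix} \] be a skew symmetric real $3 \times 3$ matrix. Then $\theta$ is nondegenerate if and only if $\dim_{\mathbb{Q}} \operatorname{span}_{\mathbb{Q}}(1, \theta_{1,2}, \theta_{1,3}, \theta_{2,3}) \geq 3$.
   Context: A skew symmetric real $d \times d$ matrix $\theta$ is nondegenerate if there is no $x \in \mathbb{Q}^d \setminus \{0\}$ such that $\langle x, \theta y \rangle \in \mathbb{Q}$ for all $y \in \mathbb{Q}^d$. *)

(* Defs.v *)
From HB Require Import structures.
From mathcomp Require Import all_boot all_order all_algebra.
From mathcomp Require Import boolp reals.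
Set Implicit Arguments. Unset Strict Implicit. Unset Printing Implicit Defensive.
Import Order.TTheory GRing.Theory Num.Theory.
Local Open Scope ring_scope.

Definition is_rational (R : realType) (r : R) : Prop :=
  exists q : rat, r = ratr q.

Definition Q_nondegenerate (R : realType) (d : nat) (theta : 'M[R]_d) : Prop :=
  ~ exists x : 'cV[rat]_d, x != 0 /\
      forall y : 'cV[rat]_d,
        is_rational (\sum_(i < d) ratr (x i ord0) * (theta *m map_mx ratr y) i ord0).

Definition Qfree (R : realType) (s : seq R) : Prop :=
  forall c : seq rat, size c = size s ->
    \sum_(i < size s) ratr (nth 0 c i) * nth 0 s i = 0 ->
    forall i, nth 0 c i = 0.

Definition Qspan_dim (R : realType) (s : seq R) : nat :=
  \max_(m : (size s).-tuple bool | `[< Qfree (mask m s) >]) size (mask m s).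

(* Main.v *)
Require Import Defs.
From HB Require Import structures.
From mathcomp Require Import all_boot all_order all_algebra.
From mathcomp Require Import boolp reals.
From mathcomp Require Import ring lra.
Import Order.TTheory GRing.Theory Num.Theory.
Local Open Scope ring_scope.

Lemma sum3 (V : nmodType) (F : 'I_3 -> V) : \sum_(i < 3) F i = F 0 + F 1 + F 2.
Proof.
rewrite !big_ord_recl big_ord0 addr0 addrA.
by congr (F _ + F _ + F _); apply/val_inj.
Qed.

Lemma ord3P (i : 'I_3) : i = 0 \/ i = 1 \/ i = 2.
Proof.
case: i => [[|[|[|n]]] Hi]; [left|right;left|right;right|done]; exact/val_inj.
Qed.

Lemma notfree3 (R : realType) (t : R) (s : seq R) :
  (forall y, y \in s -> exists p q : rat, y = ratr p + ratr q * t) ->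
  (3 <= size s)%N -> ~ Qfree s.
Proof.
case: s => [|y0 [|y1 [|y2 rest]]] //= Hs _ Hfree.
have [p0 [q0 e0]] := Hs y0 (mem_head _ _).
have [p1 [q1 e1]] : exists p q : rat, y1 = ratr p + ratr q * t.
  by apply: Hs; rewrite !inE eqxx !orbT.
have [p2 [q2 e2]] : exists p q : rat, y2 = ratr p + ratr q * t.
  by apply: Hs; rewrite !inE eqxx !orbT.
pose A : 'M[rat]_(3,2) := \matrix_(i < 3, j < 2)
  (if j == ord0 then nth 0 [:: p0; p1; p2] i else nth 0 [:: q0; q1; q2] i).
have : kermx A != 0.
  rewrite kermx_eq0 /row_free; apply/eqP => H.
  by have := rank_leq_col A; rewrite H.
move/matrix0Pn => [i [j Hij]].
pose v := row i (kermx A).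
have Hv : v *m A = 0 by rewrite /v -row_mul mulmx_ker row0.
have Ep : v ord0 0 * p0 + v ord0 1 * p1 + v ord0 2 * p2 = 0.
  by have := congr1 (fun M : 'M[rat]_(1,2) => M ord0 ord0) Hv; rewrite !mxE sum3 !mxE.
have Eq : v ord0 0 * q0 + v ord0 1 * q1 + v ord0 2 * q2 = 0.
  by have := congr1 (fun M : 'M[rat]_(1,2) => M ord0 (1 : 'I_2)) Hv; rewrite !mxE sum3 !mxE.
have := Hfree ([:: v ord0 0; v ord0 1; v ord0 2] ++ nseq (size rest) 0).
rewrite size_cat size_nseq => /(_ erefl).
rewrite [size [:: y0, y1, y2 & rest]]/= !big_ord_recl /=.
rewrite big1; last by move=> k _; rewrite /= nth_nseq if_same rmorph0 mul0r.
rewrite addr0 !addrA.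
have Hrel : forall u0 u1 u2 : rat, u0 * p0 + u1 * p1 + u2 * p2 = 0 ->
   u0 * q0 + u1 * q1 + u2 * q2 = 0 ->
   ratr u0 * y0 + ratr u1 * y1 + ratr u2 * y2 = 0 :> R.
  move=> u0 u1 u2 h1 h2; rewrite e0 e1 e2.
  have -> : ratr u0 * (ratr p0 + ratr q0 * t) + ratr u1 * (ratr p1 + ratr q1 * t)
    + ratr u2 * (ratr p2 + ratr q2 * t) = ratr (u0 * p0 + u1 * p1 + u2 * p2)
      + ratr (u0 * q0 + u1 * q1 + u2 * q2) * t :> R by ring.
  by rewrite h1 h2 rmorph0 mul0r addr0.
move=> /(_ _) H; have {}H := H (Hrel _ _ _ Ep Eq) j.
have : v ord0 j != 0 by rewrite /v mxE.
by case: (ord3P j) H => [->|[->|->]] /= ->; rewrite eqxx.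
Qed.

Lemma dim_le2 (R : realType) (t : R) (s : seq R) :
  (forall y, y \in s -> exists p q : rat, y = ratr p + ratr q * t) ->
  (Qspan_dim s <= 2)%N.
Proof.
move=> Hs; rewrite /Qspan_dim; apply/bigmax_leqP => m /asboolP Hf.
rewrite leqNgt; apply/negP => H3.
by apply: (@notfree3 R t _ _ H3 Hf) => y /mem_mask; exact: Hs.
Qed.

Lemma free_dim (R : realType) (s : seq R) (m : (size s).-tuple bool) :
  Qfree (mask m s) -> (size (mask m s) <= Qspan_dim s)%N.
Proof.
move=> Hf; rewrite /Qspan_dim.
by apply: (leq_bigmax_cond (P := fun m : (size s).-tuple bool => `[< Qfree (mask m s) >])); apply/asboolP.
Qed.

Lemma notfree_rel (R : realType) (u v : R) :
  ~ is_rational u -> ~ Qfree [:: 1; u; v] ->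
  exists q : rat, is_rational (v - ratr q * u).
Proof.
move=> Hu Hnf.
case: (pselect (exists c : seq rat, [/\ size c = 3%N,
   \sum_(i < 3) ratr (nth 0 c i) * nth 0 [:: 1; u; v] i = 0 &
   exists i, nth 0 c i != 0])) => [[c [Hs Hsum [i Hi]]]|Hno]; last first.
  exfalso; apply: Hnf => c Hs Hsum i; case: (eqVneq (nth 0 c i) 0) => // Hi; exfalso; apply: Hno.
  by exists c; split => //; exists i.
case: c Hs Hsum Hi => [|c0 [|c1 [|c2 [|]]]] //= _.
rewrite !big_ord_recl big_ord0 /= mulr1 addr0 => Hsum Hi.
have [c2z|c2n] := eqVneq c2 0.
  exfalso; move: Hsum; rewrite c2z rmorph0 mul0r addr0.
  have [c1z|c1n] := eqVneq c1 0.
    rewrite c1z rmorph0 mul0r addr0 => /eqP; rewrite fmorph_eq0 => /eqP c0z.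
    by move: Hi; case: i => [|[|[|i]]] //=; rewrite ?c0z ?c1z ?c2z ?nth_nil eqxx.
  move=> H; apply: Hu; exists (- c0 / c1).
  have H1 : ratr c1 * u = - ratr c0 :> R by lra.
  have Hc1 : ratr c1 != 0 :> R by rewrite fmorph_eq0.
  rewrite -(mulKf Hc1 u) H1 fmorph_div rmorphN /=; field; exact: Hc1.
have Hc2 : ratr c2 != 0 :> R by rewrite fmorph_eq0.
exists (- c1 / c2); exists (- c0 / c2).
have H1 : ratr c2 * v = - ratr c0 - ratr c1 * u :> R by lra.
rewrite -(mulKf Hc2 v) H1.
rewrite !fmorph_div !rmorphN /=; field; exact: Hc2.
Qed.

Lemma span4 (R : realType) (t z0 z1 z2 z3 : R) :
  (exists p q : rat, z0 = ratr p + ratr q * t) ->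
  (exists p q : rat, z1 = ratr p + ratr q * t) ->
  (exists p q : rat, z2 = ratr p + ratr q * t) ->
  (exists p q : rat, z3 = ratr p + ratr q * t) ->
  forall y, y \in [:: z0; z1; z2; z3] -> exists p q : rat, y = ratr p + ratr q * t.
Proof.
by move=> H0 H1 H2 H3 y; rewrite !inE => /or4P [] /eqP ->.
Qed.

Lemma one_span (R : realType) (t : R) : exists p q : rat, 1 = ratr p + ratr q * t.
Proof. by exists 1, 0; rewrite rmorph1 rmorph0 mul0r addr0. Qed.

Lemma self_span (R : realType) (t : R) : exists p q : rat, t = ratr p + ratr q * t.
Proof. by exists 0, 1; rewrite rmorph1 rmorph0 mul1r add0r. Qed.

Lemma solve1 (R : realType) (k : rat) (z rhs : R) :
  k != 0 -> ratr k * z = rhs -> z = rhs / ratr k.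
Proof.
move=> Hk H; have Hk' : ratr k != 0 :> R by rewrite fmorph_eq0.
by rewrite -H mulrC mulKf.
Qed.

Theorem lemma4p1 (R : realType) (theta : 'M[R]_3) :
  theta^T = - theta ->
  (Q_nondegenerate theta <->
   leq 3 (Qspan_dim [:: 1; theta 0 1; theta 0 2; theta 1 2])).
Proof.
move=> Hskew.
have Hd : forall i, theta i i = 0.
  move=> i; have := congr1 (fun M : 'M[R]_3 => M i i) Hskew; rewrite !mxE => H; lra.
have H10 : theta 1 0 = - theta 0 1.
  by have := congr1 (fun M : 'M[R]_3 => M 0 1) Hskew; rewrite !mxE.
have H20 : theta 2 0 = - theta 0 2.
  by have := congr1 (fun M : 'M[R]_3 => M 0 2) Hskew; rewrite !mxE.
have H21 : theta 2 1 = - theta 1 2.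
  by have := congr1 (fun M : 'M[R]_3 => M 1 2) Hskew; rewrite !mxE.
have Exp : forall x y : 'cV[rat]_3,
  \sum_(i < 3) ratr (x i ord0) * (theta *m map_mx ratr y) i ord0 =
  ratr (x 0 ord0) * (theta 0 1 * ratr (y 1 ord0) + theta 0 2 * ratr (y 2 ord0))
  + ratr (x 1 ord0) * (- theta 0 1 * ratr (y 0 ord0) + theta 1 2 * ratr (y 2 ord0))
  + ratr (x 2 ord0) * (- theta 0 2 * ratr (y 0 ord0) - theta 1 2 * ratr (y 1 ord0)).
  move=> x y; rewrite sum3 !mxE !sum3 !mxE !Hd H10 H20 H21; ring.
set a := theta 0 1 in Exp *; set b := theta 0 2 in Exp *; set c := theta 1 2 in Exp *.
have colE : forall (u0 u1 u2 : rat) (i : 'I_3),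
   (\col_(k < 3) nth 0 [:: u0; u1; u2] k) i ord0 = nth 0 [:: u0; u1; u2] i.
  by move=> u0 u1 u2 i; rewrite mxE.
split.
- move=> Hnd; rewrite leqNgt; apply/negP => Hlt.
  have NF : forall m : 4.-tuple bool,
      Qfree (mask m ([:: 1%R; a; b; c] : seq R)) -> (size (mask m ([:: 1%R; a; b; c] : seq R)) < 3)%N.
    by move=> m Hf; exact: leq_ltn_trans (@free_dim R [:: 1; a; b; c] m Hf) Hlt.
  have Nab : ~ Qfree [:: 1; a; b] by move=> /(NF [tuple true; true; true; false]).
  have Nac : ~ Qfree [:: 1; a; c] by move=> /(NF [tuple true; true; false; true]).
  have Nbc : ~ Qfree [:: 1; b; c] by move=> /(NF [tuple true; false; true; true]).
  apply: Hnd.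
  have [[r1 ea]|Ha] := pselect (is_rational a).
    have [[r2 eb]|Hb] := pselect (is_rational b).
      exists (\col_(k < 3) nth 0 [:: 1; 0; 0] k); split.
        apply/negP => /eqP /(congr1 (fun M : 'cV[rat]_3 => M 0 ord0)).
        by rewrite !mxE /=.
      move=> y; rewrite Exp !colE /= ea eb.
      exists (r1 * y 1 ord0 + r2 * y 2 ord0); rewrite ?rmorph0 ?rmorph1; ring.
    have [q [r3 ec]] := @notfree_rel _ _ _ Hb Nbc.
    exists (\col_(k < 3) nth 0 [:: - q; 1; 0] k); split.
      apply/negP => /eqP /(congr1 (fun M : 'cV[rat]_3 => M 1 ord0)).
      by rewrite !mxE /=.
    move=> y; rewrite Exp !colE /=.
    have -> : c = ratr r3 + ratr q * b by rewrite -ec; ring.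
    rewrite ea.
    exists (- q * r1 * y 1 ord0 - r1 * y 0 ord0 + r3 * y 2 ord0);
      rewrite ?rmorph0 ?rmorph1; ring.
  have [q2 [r2 eb]] := @notfree_rel _ _ _ Ha Nab.
  have [q3 [r3 ec]] := @notfree_rel _ _ _ Ha Nac.
  exists (\col_(k < 3) nth 0 [:: q3; - q2; 1] k); split.
    apply/negP => /eqP /(congr1 (fun M : 'cV[rat]_3 => M 2 ord0)).
    by rewrite !mxE /=.
  move=> y; rewrite Exp !colE /=.
  have -> : c = ratr r3 + ratr q3 * a by rewrite -ec; ring.
  have -> : b = ratr r2 + ratr q2 * a by rewrite -eb; ring.
  exists (- r2 * y 0 ord0 - r3 * y 1 ord0 + (q3 * r2 - q2 * r3) * y 2 ord0);
    rewrite ?rmorph0 ?rmorph1; ring.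
- move=> H3 [x [Hx Hy]].
  have Hw : forall u0 u1 u2 : rat, is_rational (
    ratr (x 0 ord0) * (a * ratr u1 + b * ratr u2)
    + ratr (x 1 ord0) * (- a * ratr u0 + c * ratr u2)
    + ratr (x 2 ord0) * (- b * ratr u0 - c * ratr u1)).
    by move=> u0 u1 u2; have := Hy (\col_(k < 3) nth 0 [:: u0; u1; u2] k);
      rewrite Exp !colE.
  have [r0 e0] := Hw 1 0 0; have [r1 e1] := Hw 0 1 0; have [r2 e2] := Hw 0 0 1.
  rewrite ?rmorph0 ?rmorph1 ?mulr0 ?mulr1 ?addr0 ?add0r ?subr0 ?mulr0 ?addr0 ?add0r in e0 e1 e2.
  suff : (Qspan_dim [:: 1%R; a; b; c] <= 2)%N by rewrite leqNgt H3.
  have [x0z|x0n] := eqVneq (x 0 ord0) 0.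
    rewrite x0z rmorph0 in e0 e1 e2.
    have [x1z|x1n] := eqVneq (x 1 ord0) 0.
      rewrite x1z rmorph0 in e0 e1 e2.
      have [x2z|x2n] := eqVneq (x 2 ord0) 0.
        exfalso; move/negP: Hx; apply; apply/eqP/matrixP => i j.
        rewrite (ord1 j) !mxE.
        by case: (ord3P i) => [->|[->|->]].
      have X2 : ratr (x 2 ord0) != 0 :> R by rewrite fmorph_eq0.
      apply: (@dim_le2 R a); apply: span4.
      + exact: one_span.
      + exact: self_span.
      + exists (- r0 / x 2 ord0), 0.
        have -> : b = - ratr r0 / ratr (x 2 ord0) by apply: solve1 => //; lra.
        rewrite rmorph0 mul0r addr0 fmorph_div rmorphN //.
      + exists (- r1 / x 2 ord0), 0.
        have -> : c = - ratr r1 / ratr (x 2 ord0) by apply: solve1 => //; lra.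
        rewrite rmorph0 mul0r addr0 fmorph_div rmorphN //.
    have X1 : ratr (x 1 ord0) != 0 :> R by rewrite fmorph_eq0.
    apply: (@dim_le2 R b); apply: span4.
    + exact: one_span.
    + exists (- r0 / x 1 ord0), (- x 2 ord0 / x 1 ord0).
      have -> : a = (- ratr r0 - ratr (x 2 ord0) * b) / ratr (x 1 ord0)
        by apply: solve1 => //; lra.
      rewrite !fmorph_div !rmorphN /=; field; exact: X1.
    + exact: self_span.
    + exists (r2 / x 1 ord0), 0.
      have -> : c = ratr r2 / ratr (x 1 ord0) by apply: solve1 => //; lra.
      rewrite rmorph0 mul0r addr0 fmorph_div //.
  have X0 : ratr (x 0 ord0) != 0 :> R by rewrite fmorph_eq0.
  apply: (@dim_le2 R c); apply: span4.
  + exact: one_span.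
  + exists (r1 / x 0 ord0), (x 2 ord0 / x 0 ord0).
    have -> : a = (ratr r1 + ratr (x 2 ord0) * c) / ratr (x 0 ord0)
      by apply: solve1 => //; lra.
    rewrite !fmorph_div /=; field; exact: X0.
  + exists (r2 / x 0 ord0), (- x 1 ord0 / x 0 ord0).
    have -> : b = (ratr r2 - ratr (x 1 ord0) * c) / ratr (x 0 ord0)
      by apply: solve1 => //; lra.
    rewrite !fmorph_div !rmorphN /=; field; exact: X0.
  + exact: self_span.
Qed.
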